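(* Let $\tau$ be an untwisted skew product with base shift a transitive subshift of finite type and group factor $\mathbb Z^d$. (b) If $0\in\mathrm{rot}(\tau)$, then $\mathrm{rot}(\tau)$ is $d$-dimensional if and only if $\langle D(\tau)\rangle$ is a rank-$d$ subgroup of $\mathbb Z^d$. (c) If $\tau$ has the ftp and $0\in\mathrm{rot}(\tau)$, then $\mathrm{rot}(\tau)$ is $d$-dimensional.
   Context: Subshift of finite type $(\Sigma,\sigma)$: finite state set $S$, $\{0,1\}$-matrix $C$, $\Sigma=\{s\in S^{\mathbb Z}:C_{s_is_{i+1}}=1\ \forall i\}$, $\sigma$ the left shift; transitive means for any states $a,b$ there is an allowed finite word from $a$ to $b$. Untwisted skew product: $\tau(s,n)=(\sigma s,n+h(s))$ on $\Sigma\times\mathbb Z^d$, $h$ depending only on $(s_0,s_1)$. $h(s,n)=\sum_{i=0}^{n-1}h(\sigma^is)$; $\mathrm{rot}(s)=\lim h(s,n)/n$ when it exists; $\mathrm{rot}(\tau)\subset\mathbb R^d$ the set of all rotation vectors (it is a convex polytope, the convex hull of rotation vectors of finitely many periodic points). Dimension means dimension of the convex set. $D(\tau)=\{h(p,n):n>0,\sigma^np=p\}$; $\langle X\rangle$ the generated subgroup. ftp: $\tau_\Gamma$ (induced map on $\Sigma\times\mathbb Z^d/\Gamma$) is transitive for every finite-index subgroup $\Gamma$. *)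

(* Defs.v *)
From Stdlib Require Import Reals ZArith.
From mathcomp Require Import all_boot.

Set Implicit Arguments.
Unset Strict Implicit.
Unset Printing Implicit Defensive.

Definition zvec (d : nat) := 'I_d -> Z.
Definition rvec (d : nat) := 'I_d -> R.

Definition zadd d (u v : zvec d) : zvec d := fun j => (u j + v j)%Z.
Definition zsub d (u v : zvec d) : zvec d := fun j => (u j - v j)%Z.
Definition zzero d : zvec d := fun _ => 0%Z.

Definition seqZ (S : Type) := Z -> S.

Definition in_Sigma (S : finType) (C : S -> S -> bool) (s : seqZ S) : Prop :=
  forall i : Z, C (s i) (s (i + 1)%Z) = true.

Definition shift (S : Type) (s : seqZ S) : seqZ S := fun i => s (i + 1)%Z.
Definition shiftn (S : Type) (n : nat) (s : seqZ S) : seqZ S :=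
  fun i => s (i + Z.of_nat n)%Z.

Fixpoint allowed_path (S : finType) (C : S -> S -> bool) (a : S) (w : seq S) : bool :=
  match w with
  | [::] => true
  | x :: w' => C a x && allowed_path C x w'
  end.

Definition sft_transitive (S : finType) (C : S -> S -> bool) : Prop :=
  forall a b : S, exists w : seq S,
    w <> [::] /\ allowed_path C a w = true /\ last a w = b.

(* h : S -> S -> Z^d, the cocycle h(s) = h(s_0, s_1);
   Birkhoff sum h(s,n) = sum_{k<n} h(sigma^k s) *)
Definition hsum (S : Type) (d : nat) (h : S -> S -> zvec d) (s : seqZ S) (n : nat)
  : zvec d :=
  fun j => \big[Z.add/0%Z]_(k < n) h (s (Z.of_nat k)) (s (Z.of_nat k + 1)%Z) j.

Definition rot_of (S : Type) (d : nat) (h : S -> S -> zvec d) (s : seqZ S)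
  (v : rvec d) : Prop :=
  forall j : 'I_d, Un_cv (fun n => Rdiv (IZR (hsum h s n j)) (INR n)) (v j).

Definition rot_set (S : finType) (C : S -> S -> bool) (d : nat)
  (h : S -> S -> zvec d) (v : rvec d) : Prop :=
  exists s, in_Sigma C s /\ rot_of h s v.

Definition Dset (S : finType) (C : S -> S -> bool) (d : nat)
  (h : S -> S -> zvec d) (v : zvec d) : Prop :=
  exists (p : seqZ S) (n : nat), (0 < n)%N /\ in_Sigma C p /\
    (forall i, shiftn n p i = p i) /\ v = hsum h p n.

Inductive gen_subgroup (d : nat) (X : zvec d -> Prop) : zvec d -> Prop :=
  | gen_zero : gen_subgroup X (@zzero d)
  | gen_in : forall v, X v -> gen_subgroup X v
  | gen_sub : forall u v, gen_subgroup X u -> gen_subgroup X v ->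
      gen_subgroup X (zsub u v).

Definition Z_lin_indep (d : nat) (w : 'I_d -> zvec d) : Prop :=
  forall c : 'I_d -> Z,
    (forall j : 'I_d, \big[Z.add/0%Z]_(i < d) (c i * w i j)%Z = 0%Z) ->
    forall i, c i = 0%Z.

(* a subgroup G of Z^d has rank d: it contains d Z-linearly independent
   elements (rank = maximal number of independent elements, always <= d) *)
Definition rank_full (d : nat) (G : zvec d -> Prop) : Prop :=
  exists w : 'I_d -> zvec d, (forall i, G (w i)) /\ Z_lin_indep w.

Definition R_lin_indep (d : nat) (w : 'I_d -> rvec d) : Prop :=
  forall c : 'I_d -> R,
    (forall j : 'I_d, \big[Rplus/R0]_(i in 'I_d) Rmult (c i) (w i j) = R0) ->
    forall i, c i = R0.

(* a set K of R^d is d-dimensional: its affine hull is R^d, i.e. it contains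
   d+1 affinely independent points p_0, ..., p_d *)
Definition full_dim (d : nat) (K : rvec d -> Prop) : Prop :=
  exists p : 'I_d.+1 -> rvec d, (forall k, K (p k)) /\
    R_lin_indep (fun i : 'I_d => fun j => Rminus (p (lift ord0 i) j) (p ord0 j)).

Definition is_subgroup (d : nat) (G : zvec d -> Prop) : Prop :=
  G (@zzero d) /\ (forall u v, G u -> G v -> G (zsub u v)).

Definition finite_index (d : nat) (G : zvec d -> Prop) : Prop :=
  exists reps : seq (zvec d), forall v, exists r, List.In r reps /\ G (zsub v r).

(* A subset of Sigma x Z^d/G is represented by its G-saturated preimage
   U in Sigma x Z^d.  It is open (product topology, Z^d/G discrete) iff for each
   (s,v) in U there is N such that every t in Sigma agreeing with s on [-N,N]
   gives (t,v) in U. *)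
Definition sat_open (S : finType) (C : S -> S -> bool) (d : nat)
  (G : zvec d -> Prop) (U : seqZ S -> zvec d -> Prop) : Prop :=
  (forall s v g, G g -> U s v -> U s (zadd v g)) /\
  (forall s v, in_Sigma C s -> U s v ->
     exists N : nat, forall t, in_Sigma C t ->
       (forall i : Z, (Z.abs i <= Z.of_nat N)%Z -> t i = s i) -> U t v).

(* tau^n (s, v) = (sigma^n s, v + h(s,n)); tau_G transitive: for all nonempty
   open U, V of Sigma x Z^d/G there is n > 0 with tau_G^n(U) meeting V *)
Definition tau_quot_transitive (S : finType) (C : S -> S -> bool) (d : nat)
  (h : S -> S -> zvec d) (G : zvec d -> Prop) : Prop :=
  forall U V : seqZ S -> zvec d -> Prop,
    sat_open C G U -> sat_open C G V ->
    (exists s v, in_Sigma C s /\ U s v) ->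
    (exists s v, in_Sigma C s /\ V s v) ->
    exists s v (n : nat), (0 < n)%N /\ in_Sigma C s /\ U s v /\
      V (shiftn n s) (zadd v (hsum h s n)).

Definition ftp (S : finType) (C : S -> S -> bool) (d : nat)
  (h : S -> S -> zvec d) : Prop :=
  forall G : zvec d -> Prop, is_subgroup G -> finite_index G ->
    tau_quot_transitive C h G.

(* Main.v *)
Require Import Defs.
From HB Require Import structures.
From Stdlib Require Import Reals ZArith Lra Lia Classical ClassicalEpsilon FunctionalExtensionality.
From mathcomp Require Import all_boot all_order all_algebra.
Set Implicit Arguments. Unset Strict Implicit. Unset Printing Implicit Defensive.
Import Order.TTheory GRing.Theory Num.Theory.

Definition Reqb (x y : R) : bool := if Req_EM_T x y then true else false.
Lemma ReqP : Equality.axiom Reqb.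
Proof. move=> x y; rewrite /Reqb; case: Req_EM_T => H; by constructor. Qed.
HB.instance Definition _ := hasDecEq.Build R ReqP.

Definition Rfind (P : pred R) (n : nat) : option R :=
  match excluded_middle_informative (exists x, P x) with
  | left H => Some (proj1_sig (constructive_indefinite_description _ H))
  | right _ => None
  end.
Lemma Rfind_correct P n x : Rfind P n = Some x -> P x.
Proof. rewrite /Rfind; case: excluded_middle_informative => // H [<-].
by case: constructive_indefinite_description. Qed.
Lemma Rfind_complete (P : pred R) : (exists x, P x) -> exists n, Rfind P n.
Proof. move=> H; exists 0%N; rewrite /Rfind; case: excluded_middle_informative => //. Qed.
Lemma Rfind_ext (P Q : pred R) : P =1 Q -> Rfind P =1 Rfind Q.
Proof. move=> H n; have -> : P = Q by apply: functional_extensionality. by []. Qed.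
HB.instance Definition _ := hasChoice.Build R Rfind_correct Rfind_complete Rfind_ext.

Lemma RaddA : associative Rplus. Proof. move=> *; lra. Qed.
Lemma RaddC : commutative Rplus. Proof. move=> *; lra. Qed.
Lemma Radd0 : left_id R0 Rplus. Proof. move=> *; lra. Qed.
Lemma RaddN : left_inverse R0 Ropp Rplus. Proof. move=> *; lra. Qed.
HB.instance Definition _ := GRing.isZmodule.Build R RaddA RaddC Radd0 RaddN.
Lemma RmulA : associative Rmult. Proof. move=> *; ring. Qed.
Lemma RmulC : commutative Rmult. Proof. move=> *; ring. Qed.
Lemma Rmul1 : left_id R1 Rmult. Proof. move=> *; ring. Qed.
Lemma RmulDl : left_distributive Rmult Rplus. Proof. move=> *; ring. Qed.
Lemma R1n0 : R1 != R0. Proof. apply/eqP; lra. Qed.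
HB.instance Definition _ := GRing.Zmodule_isComNzRing.Build R RmulA RmulC Rmul1 RmulDl R1n0.
Definition Rinv' (x : R) := if Reqb x R0 then R0 else Rinv x.
Lemma RmulVf (x : R) : (x != 0)%R -> (Rinv' x * x)%R = 1%R.
Proof. move=> H. have H' : x <> R0 by move=> E; rewrite E eqxx in H.
rewrite /Rinv' /Reqb; destruct (Req_EM_T x R0) as [e|n]; [contradiction | apply Rinv_l; exact H']. Qed.
Lemma Rinv0' : Rinv' 0%R = 0%R.
Proof. rewrite /Rinv' /Reqb; case: Req_EM_T => //. Qed.
HB.instance Definition _ := GRing.ComNzRing_isField.Build R RmulVf Rinv0'.

Local Open Scope ring_scope.

Definition z2i (z : Z) : int := (Z.to_nat z)%:Z - (Z.to_nat (Z.opp z))%:Z.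
Definition i2z (n : int) : Z :=
  match n with Posz k => Z.of_nat k | Negz k => Z.opp (Z.of_nat k.+1) end.

Lemma z2i_nat (a b : nat) : z2i (Z.sub (Z.of_nat a) (Z.of_nat b)) = a%:Z - b%:Z.
Proof.
rewrite /z2i; case: (leqP b a) => hab.
- have hab' := hab; move/ssrnat.leP: hab' => hab'.
  have -> : Z.to_nat (Z.sub (Z.of_nat a) (Z.of_nat b)) = (a - b)%N.
    by rewrite -minusE; lia.
  have -> : Z.to_nat (Z.opp (Z.sub (Z.of_nat a) (Z.of_nat b))) = 0%N by lia.
  by rewrite subr0 subzn.
- have hab' := hab; move/ssrnat.ltP: hab' => hab'.
  have -> : Z.to_nat (Z.sub (Z.of_nat a) (Z.of_nat b)) = 0%N by lia.
  have -> : Z.to_nat (Z.opp (Z.sub (Z.of_nat a) (Z.of_nat b))) = (b - a)%N.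
    by rewrite -minusE; lia.
  by rewrite sub0r -opprB (subzn (ltnW hab)).
Qed.

Lemma zdec (z : Z) : z = Z.sub (Z.of_nat (Z.to_nat z)) (Z.of_nat (Z.to_nat (Z.opp z))).
Proof. lia. Qed.

Lemma z2i_add x y : z2i (Z.add x y) = z2i x + z2i y.
Proof.
rewrite (zdec x) (zdec y); set a1 := Z.to_nat x; set b1 := Z.to_nat (Z.opp x);
set a2 := Z.to_nat y; set b2 := Z.to_nat (Z.opp y).
have -> : Z.add (Z.sub (Z.of_nat a1) (Z.of_nat b1)) (Z.sub (Z.of_nat a2) (Z.of_nat b2)) =
   Z.sub (Z.of_nat (a1 + a2)) (Z.of_nat (b1 + b2)) by rewrite -!plusE; lia.
rewrite !z2i_nat !PoszD opprD addrACA //.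
Qed.

Lemma z2i_mul x y : z2i (Z.mul x y) = z2i x * z2i y.
Proof.
rewrite (zdec x) (zdec y); set a1 := Z.to_nat x; set b1 := Z.to_nat (Z.opp x);
set a2 := Z.to_nat y; set b2 := Z.to_nat (Z.opp y).
have -> : Z.mul (Z.sub (Z.of_nat a1) (Z.of_nat b1)) (Z.sub (Z.of_nat a2) (Z.of_nat b2)) =
   Z.sub (Z.of_nat (a1 * a2 + b1 * b2)) (Z.of_nat (a1 * b2 + b1 * a2))
  by rewrite -!plusE -!multE; lia.
rewrite !z2i_nat !PoszD !PoszM mulrBl !mulrBr opprB opprD !addrA.
congr (_ - _); rewrite addrC addrA; congr (_ + _); by rewrite addrC.
Qed.


Lemma z2i0 : z2i Z0 = 0. Proof. by []. Qed.

Lemma z2i_opp x : z2i (Z.opp x) = - z2i x.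
Proof. by rewrite /z2i Z.opp_involutive opprB. Qed.

Lemma z2i_sub x y : z2i (Z.sub x y) = z2i x - z2i y.
Proof. by rewrite -Z.add_opp_r z2i_add z2i_opp. Qed.

Lemma z2iK x : i2z (z2i x) = x.
Proof.
rewrite (zdec x); set a := Z.to_nat x; set b := Z.to_nat (Z.opp x).
rewrite z2i_nat; case: (leqP b a) => hab.
- rewrite (subzn hab) /=. move/ssrnat.leP: hab => hab. rewrite -minusE; lia.
- rewrite -opprB (subzn (ltnW hab)).
  have -> : (b - a)%N = (b - a).-1.+1 by rewrite prednK // subn_gt0.
  rewrite -NegzE /= -(prednK (n:=(b-a)%N)) ?subn_gt0 // /=.
  move/ssrnat.ltP: hab => hab. rewrite -minusE; lia.
Qed.

Lemma i2zK n : z2i (i2z n) = n.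
Proof.
case: n => k /=.
- have -> : Z.of_nat k = Z.sub (Z.of_nat k) (Z.of_nat 0) by lia.
  by rewrite z2i_nat subr0.
- have -> : Z.neg (Pos.of_succ_nat k) = Z.sub (Z.of_nat 0) (Z.of_nat k.+1) by lia.
  by rewrite z2i_nat sub0r NegzE.
Qed.

Lemma z2i_inj : injective z2i.
Proof. by move=> x y E; rewrite -(z2iK x) -(z2iK y) E. Qed.

Lemma z2i_big (I : Type) (r : seq I) (P : pred I) (F : I -> Z) :
  z2i (\big[Z.add/Z0]_(i <- r | P i) F i) = \sum_(i <- r | P i) z2i (F i).
Proof. exact: (big_morph z2i z2i_add z2i0). Qed.

Lemma natr_INR n : (n%:R : R) = INR n.
Proof.
elim: n => [//|n IH]; rewrite mulrS IH S_INR.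
change (Rplus R1 (INR n) = Rplus (INR n) R1). lra.
Qed.

Lemma IZR_z2i z : IZR z = ((z2i z)%:~R : R).
Proof.
rewrite {1}(zdec z) minus_IZR -!INR_IZR_INZ /z2i rmorphB /= -!natr_INR.
by [].
Qed.

Lemma IZR_i2z n : IZR (i2z n) = (n%:~R : R).
Proof. by rewrite IZR_z2i i2zK. Qed.

Lemma intrR_inj : injective (fun n : int => (n%:~R : R)).
Proof. move=> x y /= E; rewrite -(i2zK x) -(i2zK y); congr z2i; apply: eq_IZR.
by rewrite !IZR_i2z. Qed.

Section Extract.
Variables (F : fieldType) (d : nat) (X : 'rV[F]_d -> Prop).
Hypothesis noc : ~ exists c : 'cV[F]_d, c != 0 /\ forall x, X x -> x *m c = 0.

Lemma extract_step r : (r <= d)%N ->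
  exists A : 'M[F]_(r, d), (forall i, X (row i A)) /\ \rank A = r.
Proof.
elim: r => [|r IH] hr.
  exists 0; split; first by case.
  by rewrite mxrank0.
have [A [XA rA]] := IH (ltnW hr).
pose K := kermx A^T.
have rK : \rank K = (d - r)%N by rewrite mxrank_ker mxrank_tr rA.
have K0 : K != 0 by rewrite -mxrank_eq0 rK subn_eq0 -ltnNge.
have [i Ki] : exists i, row i K != 0.
  apply: NNPP => H; move/negP: K0; apply; apply/eqP/row_matrixP => i.
  rewrite row0; apply/eqP; apply: NNPP => H'; apply: H; exists i; exact/negP.
pose c := (row i K)^T.
have Ac : A *m c = 0.
  by rewrite /c -[A]trmxK -trmx_mul -row_mul mulmx_ker row0 trmx0.
have [x [Xx xc]] : exists x, X x /\ x *m c != 0.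
  apply: NNPP => H; apply: noc; exists c; split; first by rewrite trmx_eq0.
  move=> x Xx; apply/eqP; apply: NNPP => H'; apply: H; exists x; split => //; exact/negP.
exists (col_mx x A); split.
  move=> k; case: (@split_ordP 1 r k) => k' ->.
    have E : row (lshift r k') (col_mx x A) = x.
      by rewrite rowKu; apply/rowP => j; rewrite !mxE (ord1 k').
    exact: (eq_ind _ X Xx _ (esym E)).
  have E : row (rshift 1 k') (col_mx x A) = row k' A by rewrite rowKd.
  exact: (eq_ind _ X (XA k') _ (esym E)).
apply/eqP; rewrite eqn_leq rank_leq_row /=.
have nxA : ~~ (x <= A)%MS.
  apply/negP => /submxP [D xDA]; move: xc; by rewrite xDA -mulmxA Ac mulmx0 eqxx.
have lt : (A < x + A)%MS.
  rewrite ltmxE addsmxSr /=; apply: contra nxA => h.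
  exact: submx_trans (addsmxSl x A) h.
have h := rank_ltmx lt; rewrite rA (addsmxE x A).1 in h.
exact: h.
Qed.

Lemma extract_main : exists W : 'M[F]_d, (forall i, X (row i W)) /\ W \in unitmx.
Proof.
have [A [XA rA]] := extract_step (leqnn d).
exists A; split => //; by rewrite -row_free_unit /row_free rA.
Qed.
End Extract.

Lemma extract (F : fieldType) (d : nat) (X : 'rV[F]_d -> Prop) :
  (exists c : 'cV[F]_d, c != 0 /\ forall x, X x -> x *m c = 0) \/
  (exists W : 'M[F]_d, (forall i, X (row i W)) /\ W \in unitmx).
Proof.
case: (classic (exists c : 'cV[F]_d, c != 0 /\ forall x, X x -> x *m c = 0)) => H.
  by left. right; exact: extract_main.
Qed.


Definition zmat d (W : 'I_d -> zvec d) : 'M[int]_d := \matrix_(i, j) z2i (W i j).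
Definition zdotI d (c : 'I_d -> int) (x : zvec d) : int := \sum_j c j * z2i (x j).
Definition NullI d (X : zvec d -> Prop) :=
  exists c : 'I_d -> int, (exists j, c j != 0) /\ forall x, X x -> zdotI c x = 0.
Definition qvec d (x : zvec d) : 'rV[rat]_d := \row_j ((z2i (x j))%:~R : rat).

Lemma choice_fun (A B : Type) (P : A -> B -> Prop) :
  (forall a, exists b, P a b) -> exists f : A -> B, forall a, P a (f a).
Proof.
move=> H; exists (fun a => proj1_sig (constructive_indefinite_description _ (H a))).
move=> a; by case: constructive_indefinite_description.
Qed.

Lemma dich d (X : zvec d -> Prop) :
  NullI X \/ exists W : 'I_d -> zvec d, (forall i, X (W i)) /\ \det (zmat W) != 0.
Proof.
case: (extract (fun v : 'rV[rat]_d => exists x, X x /\ v = qvec x)).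
- move=> [c [c0 Hc]]; left.
  pose N : int := \prod_j denq (c j 0).
  pose ci := fun j : 'I_d => numq (c j 0) * \prod_(k | k != j) denq (c k 0).
  have Hci : forall j, ((ci j)%:~R : rat) = c j 0 * N%:~R.
    move=> j; rewrite /ci /N [in RHS](bigD1 j) //= !intrM numqE mulrA //.
  have N0 : (N%:~R : rat) != 0.
    rewrite intr_eq0 /N; apply/prodf_neq0 => k _; exact: denq_neq0.
  exists ci; split.
    have [j cj] : exists j, c j 0 != 0.
      apply: NNPP => H; move/negP: c0; apply; apply/eqP/matrixP => j k.
      rewrite (ord1 k) mxE; apply/eqP; apply: NNPP => H'; apply: H; exists j; exact/negP.
    exists j; rewrite -(intr_eq0 rat) Hci mulf_neq0 //.
  move=> x Xx; apply/eqP; rewrite -(intr_eq0 rat); apply/eqP.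
  have := Hc (qvec x) (ex_intro _ x (conj Xx erefl)).
  move/matrixP/(_ 0 0); rewrite !mxE => E.
  rewrite /zdotI (big_morph _ (@intrD _) (mulr0z _)).
  rewrite (eq_bigr (fun j => (N%:~R : rat) * (qvec x 0 j * c j 0))); last first.
    move=> j _; rewrite intrM Hci mxE.
    by rewrite [c j 0 * _]mulrC -mulrA [_ * c j 0]mulrC.
  by rewrite -mulr_sumr E mulr0.
- move=> [W [XW uW]]; right.
  have [f Hf] := choice_fun XW.
  exists f; split; first by move=> i; case: (Hf i).
  have EW : W = map_mx (fun n : int => (n%:~R : rat)) (zmat f).
    apply/row_matrixP => i; case: (Hf i) => _ ->.
    by apply/rowP => j; rewrite !mxE.
  move: uW; rewrite EW unitmxE det_map_mx unitfE intr_eq0 //.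
Qed.

Lemma Zind d (W : 'I_d -> zvec d) : \det (zmat W) != 0 -> Z_lin_indep W.
Proof.
move=> dW c Hc.
pose v : 'rV[int]_d := \row_i z2i (c i).
have v0 : v = 0.
  apply: contraNeq dW => vn0; apply/det0P; exists v => //.
  apply/rowP => j; rewrite !mxE.
  rewrite (eq_bigr (fun i => z2i (Z.mul (c i) (W i j)))); last first.
    by move=> i _; rewrite !mxE z2i_mul.
  by rewrite -z2i_big Hc.
move=> i; apply: z2i_inj; move/rowP: v0 => /(_ i); rewrite !mxE => ->; by [].
Qed.

Lemma gen_null d (X : zvec d -> Prop) c v :
  (forall x, X x -> zdotI c x = 0) -> gen_subgroup X v -> zdotI c v = 0.
Proof.
move=> H; elim => [|x Xx|u w _ Hu _ Hw].
- by rewrite /zdotI big1 // => j _; rewrite /zzero z2i0 mulr0.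
- exact: H.
- rewrite /zdotI /zsub (eq_bigr (fun j => c j * z2i (u j) - c j * z2i (w j))).
    by rewrite sumrB -/(zdotI c u) -/(zdotI c w) Hu Hw subr0.
  by move=> j _; rewrite z2i_sub mulrBr.
Qed.

Lemma RZ d (X : zvec d -> Prop) : rank_full (gen_subgroup X) -> ~ NullI X.
Proof.
move=> [w [Gw Iw]] [c [[j0 cj0] Hc]].
have Hw : forall i, zdotI c (w i) = 0 by move=> i; exact: gen_null Hc (Gw i).
pose cc : 'cV[int]_d := \col_j c j.
have Wc : (zmat w) *m cc = 0.
  apply/colP => i; rewrite !mxE; transitivity (zdotI c (w i)); last exact: Hw.
  by apply: eq_bigr => j _; rewrite !mxE mulrC.
have d0 : \det (zmat w) == 0.
  rewrite -det_tr; apply/det0P; exists cc^T.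
    rewrite trmx_eq0; apply/eqP => /colP /(_ j0); rewrite !mxE => E.
    by rewrite E eqxx in cj0.
  by rewrite -trmx_mul Wc trmx0.
case/det0P: d0 => v vn0 vW.
have := Iw (fun i => i2z (v 0 i)).
have H : forall j, \big[Z.add/Z0]_(i < d) Z.mul (i2z (v 0 i)) (w i j) = Z0.
  move=> j; apply: z2i_inj; rewrite z2i_big z2i0.
  move/rowP: vW => /(_ j); rewrite !mxE => E.
  transitivity (\sum_i v 0 i * zmat w i j); last exact: E.
  by apply: eq_bigr => i _; rewrite z2i_mul i2zK mxE.
move=> /(_ H) Hv; move/negP: vn0; apply; apply/eqP/matrixP.
move=> i j; rewrite (ord1 i) mxE -(i2zK (v 0 j)) Hv; by [].
Qed.

Lemma bigR_in d (F : 'I_d -> R) : \big[Rplus/R0]_(i in 'I_d) F i = \sum_i F i.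
Proof. by apply: eq_bigl. Qed.

Lemma Rind d (W : 'I_d -> zvec d) (n : 'I_d -> nat) :
  \det (zmat W) != 0 -> (forall i, (0 < n i)%N) ->
  R_lin_indep (fun i j => Rdiv (IZR (W i j)) (INR (n i))).
Proof.
move=> dW npos c Hc.
pose v : 'rV[R]_d := \row_i (Rdiv (c i) (INR (n i))).
pose MW := map_mx (fun k : int => (k%:~R : R)) (zmat W).
have uW : MW \in unitmx.
  rewrite unitmxE det_map_mx unitfE; apply/eqP => E.
  move/eqP: dW; apply; apply: intrR_inj; by rewrite /= E.
have vW : v *m MW = 0.
  apply/rowP => j; rewrite !mxE.
  transitivity (\sum_i Rmult (c i) (Rdiv (IZR (W i j)) (INR (n i)))).
    2: by rewrite -bigR_in; exact: Hc j.
  apply: eq_bigr => i _; rewrite !mxE -IZR_z2i.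
  change (Rmult (Rdiv (c i) (INR (n i))) (IZR (W i j)) = Rmult (c i) (Rdiv (IZR (W i j)) (INR (n i)))).
  by rewrite /Rdiv; ring.
have v0 : v = 0 by rewrite -(mulmxK uW v) vW mul0mx.
move=> i; move/rowP: v0 => /(_ i); rewrite !mxE => E.
have ni : INR (n i) <> R0 by apply: not_0_INR; move: (npos i); case: (n i).
change (Rdiv (c i) (INR (n i)) = R0) in E.
apply: (Rmult_eq_reg_r (Rinv (INR (n i)))); last by apply: Rinv_neq_0_compat.
rewrite Rmult_0_l; exact: E.
Qed.

Lemma Rdual d (U : 'I_d -> rvec d) (c : 'I_d -> int) :
  R_lin_indep U -> (exists j, c j != 0) ->
  (forall i, \sum_j (c j)%:~R * U i j = 0) -> False.
Proof.
move=> IU [j0 cj0] Hc.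
pose UM : 'M[R]_d := \matrix_(i, j) U i j.
have uU : UM \in unitmx.
  rewrite unitmxE unitfE; apply/negP => /det0P [v vn0 vU].
  move/negP: vn0; apply; apply/eqP/rowP => i; rewrite mxE.
  apply: (IU (fun i => v 0 i)) => j; rewrite bigR_in.
  move/rowP: vU => /(_ j); rewrite !mxE => E.
  transitivity (\sum_k v 0 k * UM k j); last exact: E.
  by apply: eq_bigr => k _; rewrite mxE.
pose cc : 'cV[R]_d := \col_j (c j)%:~R.
have Uc : UM *m cc = 0.
  apply/colP => i; rewrite !mxE.
  transitivity (\sum_j (c j)%:~R * U i j); last exact: Hc i.
  apply: eq_bigr => j _.
  by rewrite !mxE mulrC.
have c0 : cc = 0 by rewrite -(mulKmx uU cc) Uc mulmx0.
move/colP: c0 => /(_ j0); rewrite !mxE => E.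
move/eqP: cj0; apply; apply: intrR_inj; by rewrite /= E.
Qed.

Lemma cv_bounded (a : nat -> R) (L K : R) :
  (forall m, Rle (Rabs (Rminus (a m) (Rmult (INR m) L))) K) ->
  Un_cv (fun m => Rdiv (a m) (INR m)) L.
Proof.
move=> HK eps eps0.
have K0 : Rle 0 K by apply: Rle_trans (Rabs_pos _) (HK 0%N).
have [N _] := archimed (Rdiv K eps).
exists (Z.to_nat (up (Rdiv K eps))).+1.
move=> m hm.
have hm' : Rle (INR (Z.to_nat (up (Rdiv K eps))).+1) (INR m) by apply: le_INR; exact: hm.
have mpos : Rlt 0 (INR m).
  apply: Rlt_le_trans hm'; apply: lt_0_INR; lia.
have upK : Rlt (Rdiv K eps) (INR (Z.to_nat (up (Rdiv K eps))).+1).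
  rewrite S_INR INR_IZR_INZ.
  have : Z.le Z0 (up (Rdiv K eps)).
    apply: le_IZR; apply: Rle_trans (Rlt_le _ _ N).
    rewrite /Rdiv; apply: Rmult_le_pos => //; apply: Rlt_le; exact: Rinv_0_lt_compat.
  move=> h; rewrite Z2Nat.id //; lra.
rewrite /R_dist.
have -> : Rminus (Rdiv (a m) (INR m)) L = Rdiv (Rminus (a m) (Rmult (INR m) L)) (INR m).
  field; lra.
rewrite /Rdiv Rabs_mult (Rabs_pos_eq (Rinv (INR m))); last by apply: Rlt_le; exact: Rinv_0_lt_compat.
apply: (Rle_lt_trans _ (Rmult K (Rinv (INR m)))).
  apply: Rmult_le_compat_r; [apply: Rlt_le; exact: Rinv_0_lt_compat | exact: HK].
have : Rlt (Rdiv K eps) (INR m) by lra.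
rewrite /Rdiv => h.
apply: (Rmult_lt_reg_r (INR m)) => //.
rewrite Rmult_assoc Rinv_l; last lra.
have := Rmult_lt_compat_r eps _ _ eps0 h.
rewrite Rmult_assoc Rinv_l; last lra.
lra.
Qed.

Lemma cv_const (k : R) : Un_cv (fun _ => k) k.
Proof. move=> eps e0; exists 0%N => n _; rewrite /R_dist Rminus_diag Rabs_R0; lra. Qed.

Lemma cv_sum (I : Type) (r : seq I) (F : I -> nat -> R) (L : I -> R) :
  (forall i, Un_cv (F i) (L i)) ->
  Un_cv (fun m => \sum_(i <- r) F i m) (\sum_(i <- r) L i).
Proof.
move=> HF; elim: r => [|i r IH].
  rewrite big_nil; apply: (Un_cv_ext (fun _ => R0)); last exact: cv_const.
  by move=> n; rewrite big_nil.
rewrite big_cons; apply: (Un_cv_ext (fun m => Rplus (F i m) (\sum_(j <- r) F j m))).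
  by move=> n; rewrite big_cons.
exact: CV_plus.
Qed.

Lemma fin_bound (T : finType) (f : T -> R) : exists B, forall t, Rle (Rabs (f t)) B.
Proof.
suff : forall l : seq T, exists B, forall t, t \in l -> Rle (Rabs (f t)) B.
  move=> /(_ (enum T)) [B HB]; exists B => t; apply: HB; by rewrite mem_enum.
elim => [|x l [B HB]]; first by exists R0.
exists (Rmax (Rabs (f x)) B) => t; rewrite in_cons => /orP [/eqP -> | /HB h].
  exact: Rmax_l.
apply: Rle_trans h (Rmax_r _ _).
Qed.

Lemma nat_bound (f : nat -> R) (n : nat) : exists B, forall r, (r < n)%N -> Rle (Rabs (f r)) B.
Proof.
elim: n => [|n [B HB]]; first by exists R0.
exists (Rmax (Rabs (f n)) B) => r; rewrite ltnS leq_eqVlt => /orP [/eqP -> | /HB h].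
  exact: Rmax_l.
apply: Rle_trans h (Rmax_r _ _).
Qed.

Lemma Rabs_sub_le (a b : R) : Rle (Rabs (Rminus a b)) (Rplus (Rabs a) (Rabs b)).
Proof. rewrite /Rminus -(Rabs_Ropp b); exact: Rabs_triang. Qed.

Lemma natmul_INR (x : R) (q : nat) : x *+ q = Rmult (INR q) x.
Proof.
elim: q => [|q IH]; first by change (R0 = Rmult R0 x); ring.
rewrite mulrS IH S_INR; change (Rplus x (Rmult (INR q) x) = Rmult (Rplus (INR q) R1) x); ring.
Qed.

Section Dyn.
Variables (S : finType) (C : S -> S -> bool) (d : nat) (h : S -> S -> zvec d).

Definition hsI (s : seqZ S) (m : nat) (j : 'I_d) : int :=
  \sum_(k < m) z2i (h (s (Z.of_nat k)) (s (Z.add (Z.of_nat k) 1)) j).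

Lemma hsumE s m j : z2i (hsum h s m j) = hsI s m j.
Proof. by rewrite /hsum z2i_big. Qed.

Lemma hsI_add s a b j : hsI s (a + b) j = hsI s a j + hsI (shiftn a s) b j.
Proof.
rewrite /hsI big_split_ord /=; congr (_ + _); apply: eq_bigr => k _; rewrite /shiftn /=.
have E1 : Z.of_nat (a + k) = Z.add (Z.of_nat k) (Z.of_nat a) by rewrite -plusE; lia.
have E2 : Z.add (Z.of_nat (a + k)) 1 = Z.add (Z.add (Z.of_nat k) 1) (Z.of_nat a).
  by rewrite -plusE; lia.
by rewrite E2 E1.
Qed.

Lemma z2i_of_nat q : z2i (Z.of_nat q) = q%:Z.
Proof.
have -> : Z.of_nat q = Z.sub (Z.of_nat q) (Z.of_nat 0) by lia.
by rewrite z2i_nat subr0.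
Qed.

Lemma hsum_per p n : (forall i, shiftn n p i = p i) -> forall q r j,
  hsum h p (q * n + r) j = Z.add (Z.mul (Z.of_nat q) (hsum h p n j)) (hsum h p r j).
Proof.
move=> Hp; have Es : shiftn n p = p by apply: functional_extensionality.
move=> q r j; apply: z2i_inj; rewrite z2i_add z2i_mul z2i_of_nat !hsumE.
elim: q => [|q IH]; first by rewrite mul0n add0n mul0r add0r.
rewrite mulSn -addnA hsI_add Es IH addrA; congr (_ + _).
by rewrite -[q.+1]addn1 PoszD mulrDl mul1r addrC.
Qed.

Lemma per_rot p n : (0 < n)%N -> (forall i, shiftn n p i = p i) ->
  rot_of h p (fun j => Rdiv (IZR (hsum h p n j)) (INR n)).
Proof.
move=> n0 Hp j.
set X := IZR (hsum h p n j).
have [B HB] := nat_bound (fun r => IZR (hsum h p r j)) n.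
apply: (@cv_bounded _ _ (Rplus B (Rabs X))) => m.
rewrite [in X in hsum h p X](divn_eq m n) [in X in INR X](divn_eq m n).
set q := (m %/ n)%N; set r := (m %% n)%N.
have rn : (r < n)%N by rewrite ltn_mod.
have nR : Rlt 0 (INR n) by apply: lt_0_INR; apply/ssrnat.ltP.
have rR : Rle (INR r) (INR n) by apply: le_INR; apply/ssrnat.leP; exact: ltnW.
rewrite hsum_per // plus_IZR mult_IZR -INR_IZR_INZ.
rewrite (_ : INR (q * n + r) = Rplus (Rmult (INR q) (INR n)) (INR r)); last first.
  by rewrite -plusE -multE plus_INR mult_INR.
rewrite -/X.
set A := IZR (hsum h p r j).
have -> : Rminus (Rplus (Rmult (INR q) X) A) (Rmult (Rplus (Rmult (INR q) (INR n)) (INR r)) (Rdiv X (INR n)))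
   = Rminus A (Rmult (Rdiv (INR r) (INR n)) X).
  field; lra.
apply: Rle_trans (Rabs_sub_le _ _) _.
apply: Rplus_le_compat; first exact: HB.
rewrite Rabs_mult (Rabs_pos_eq (Rdiv _ _)); last first.
  apply: Rmult_le_pos; [exact: pos_INR | apply: Rlt_le; exact: Rinv_0_lt_compat].
have : Rle (Rdiv (INR r) (INR n)) 1.
  apply: (Rmult_le_reg_r (INR n)) => //; rewrite /Rdiv Rmult_assoc Rinv_l; lra.
move=> h1; have := Rabs_pos X; nra.
Qed.
End Dyn.

Section Cob.
Variables (S : finType) (C : S -> S -> bool) (d : nat) (h : S -> S -> zvec d).
Variable c : 'I_d -> int.

Definition phi (a b : S) : int := zdotI c (h a b).

Fixpoint ws (a : S) (w : seq S) : int :=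
  match w with [::] => 0 | x :: w' => phi a x + ws x w' end.

Lemma EX s m : zdotI c (hsum h s m) =
  \sum_(k < m) phi (s (Z.of_nat k)) (s (Z.add (Z.of_nat k) 1)).
Proof.
rewrite /zdotI (eq_bigr (fun j => \sum_(k < m) c j * z2i (h (s (Z.of_nat k)) (s (Z.add (Z.of_nat k) 1)) j))).
  by rewrite exchange_big /=; apply: eq_bigr => k _; rewrite /phi /zdotI.
by move=> j _; rewrite hsumE /hsI mulr_sumr.
Qed.

Lemma ws_nth a0 a w : ws a w =
  \sum_(k < size w) phi (nth a0 (a :: w) k) (nth a0 (a :: w) k.+1).
Proof.
elim: w a => [|x w IH] a /=; first by rewrite big_ord0.
by rewrite big_ord_recl /= IH.
Qed.

Lemma allowed_nth a0 a w : allowed_path C a w = true ->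
  forall k, (k < size w)%N -> C (nth a0 (a :: w) k) (nth a0 (a :: w) k.+1) = true.
Proof.
elim: w a => [|x w IH] a //= /andP [Cax Hw] k.
case: k => [|k] hk //=.
exact: IH.
Qed.

Lemma last_nth (a0 a : S) (w : seq S) : last a w = nth a0 (a :: w) (size w).
Proof. by elim: w a => [|x w IH] a //=. Qed.

Lemma allowed_cat a w1 w2 : allowed_path C a (w1 ++ w2) =
  allowed_path C a w1 && allowed_path C (last a w1) w2.
Proof. elim: w1 a => [|x w IH] a //=; by rewrite IH andbA. Qed.

Lemma ws_cat a w1 w2 : ws a (w1 ++ w2) = ws a w1 + ws (last a w1) w2.
Proof. elim: w1 a => [|x w IH] a /=; first by rewrite add0r. by rewrite IH addrA. Qed.

Hypothesis Null : forall x, Dset C h x -> zdotI c x = 0.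

Lemma loop0 a w : w <> [::] -> allowed_path C a w = true -> last a w = a -> ws a w = 0.
Proof.
move=> wn Hw Hl.
set n := size w.
have n0 : (0 < n)%N by rewrite /n; move: wn; case: (w) => //.
have nZ : Z.lt Z0 (Z.of_nat n) by move/ssrnat.ltP: n0; lia.
pose xw k := nth a (a :: w) k.
pose p : seqZ S := fun i => xw (Z.to_nat (Z.modulo i (Z.of_nat n))).
have Hx : forall k, (k < n)%N -> C (xw k) (xw k.+1) = true by exact: allowed_nth.
have Hn : xw n = xw 0%N by rewrite /xw -last_nth Hl.
have Hsmall : forall k, (k < n)%N -> p (Z.of_nat k) = xw k.
  move=> k hk; rewrite /p Z.mod_small ?Nat2Z.id //; move/ssrnat.ltP: hk; lia.
have Hsucc : forall k, (k < n)%N -> p (Z.add (Z.of_nat k) 1) = xw k.+1.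
  move=> k hk; case: (ltnP k.+1 n) => hk1.
    rewrite (_ : Z.add (Z.of_nat k) 1 = Z.of_nat k.+1); last by lia.
    exact: Hsmall.
  have e : k.+1 = n by apply/eqP; rewrite eqn_leq hk1 hk.
  rewrite /p (_ : Z.add (Z.of_nat k) 1 = Z.of_nat n); last by rewrite -e; lia.
  by rewrite Z_mod_same_full /= e Hn.
have Hp : in_Sigma C p.
  move=> i.
  have [r0 rn] := Z.mod_pos_bound i (Z.of_nat n) nZ.
  set r := Z.modulo i (Z.of_nat n) in r0 rn.
  have kn : (Z.to_nat r < n)%N by apply/ssrnat.ltP; lia.
  have -> : p (Z.add i 1) = p (Z.add (Z.of_nat (Z.to_nat r)) 1).
    rewrite /p Z2Nat.id // /r Z.add_mod_idemp_l //; lia.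
  rewrite Hsucc //; exact: Hx.
have Hper : forall i, shiftn n p i = p i.
  move=> i; rewrite /shiftn /p.
  have -> : Z.add i (Z.of_nat n) = Z.add i (Z.mul 1 (Z.of_nat n)) by lia.
  rewrite Z.mod_add //; lia.
have := Null (ex_intro _ p (ex_intro _ n (conj n0 (conj Hp (conj Hper erefl))))).
rewrite EX (ws_nth a) => E.
transitivity (\sum_(k < n) phi (p (Z.of_nat k)) (p (Z.add (Z.of_nat k) 1))); last exact: E.
by apply: eq_bigr => k _; rewrite Hsmall // Hsucc.
Qed.

Lemma cob_g : sft_transitive C -> forall a0 : S,
  exists g : S -> int, forall a b, C a b = true -> phi a b = g b - g a.
Proof.
move=> tr a0.
have [q Hq] := choice_fun (fun b => tr b a0).
have [r Hr] := choice_fun (fun a => tr a0 a).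
exists (fun b => - ws b (q b)) => a b Cab.
have [qn [qA ql]] := Hq a; have [qbn [qbA qbl]] := Hq b; have [rn [rA rl]] := Hr a.
have L1 : ws a0 (r a ++ q a) = 0.
  apply: loop0.
  - by case: (r a) => // _ /=; case: (q a) qn.
  - by rewrite allowed_cat rA rl qA.
  - by rewrite last_cat rl ql.
have L2 : ws a0 (r a ++ b :: q b) = 0.
  apply: loop0.
  - by case: (r a).
  - by rewrite allowed_cat rA rl /= Cab qbA.
  - by rewrite last_cat rl /= qbl.
rewrite !ws_cat rl /= in L1 L2.
have E : ws a (q a) = phi a b + ws b (q b).
  by apply: (addrI (ws a0 (r a))); rewrite L1 L2.
by rewrite opprK E addrCA addNr addr0.
Qed.

Lemma tele (g : S -> int) : (forall a b, C a b = true -> phi a b = g b - g a) ->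
  forall s, in_Sigma C s -> forall m,
  \sum_(k < m) phi (s (Z.of_nat k)) (s (Z.add (Z.of_nat k) 1)) = g (s (Z.of_nat m)) - g (s Z0).
Proof.
move=> Hg s Hs; elim => [|m IH]; first by rewrite big_ord0 subrr.
rewrite big_ord_recr /= IH Hg; last exact: Hs.
have -> : Z.pos (Pos.of_succ_nat m) = Z.add (Z.of_nat m) 1 by lia.
by rewrite addrC addrA subrK.
Qed.

Lemma cob_rot : sft_transitive C -> forall s v, in_Sigma C s -> rot_of h s v ->
  \sum_j (c j)%:~R * v j = 0.
Proof.
move=> tr s v Hs Hv.
have [g Hg] := cob_g tr (s Z0).
pose u := fun m => \sum_j (c j)%:~R * Rdiv (IZR (hsum h s m j)) (INR m).
have cv1 : Un_cv u (\sum_j (c j)%:~R * v j).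
  apply: cv_sum => j; apply: CV_mult; [exact: cv_const | exact: Hv].
have [B HB] := fin_bound (fun x => ((g x)%:~R : R)).
have cv2 : Un_cv u R0.
  apply: (Un_cv_ext (fun m => Rdiv ((g (s (Z.of_nat m)) - g (s Z0))%:~R) (INR m))).
    move=> m; rewrite /u -(tele Hg Hs m) -EX /zdotI.
    rewrite (big_morph _ (@intrD _) (mulr0z _)) /Rdiv.
    rewrite [LHS](_ : _ = (\sum_i ((c i * z2i (hsum h s m i))%:~R : R)) * Rinv (INR m)) //.
    rewrite mulr_suml.
    apply: eq_bigr => j _; rewrite intrM -IZR_z2i.
    change (Rmult (Rmult ((c j)%:~R) (IZR (hsum h s m j))) (Rinv (INR m)) =
            Rmult ((c j)%:~R) (Rmult (IZR (hsum h s m j)) (Rinv (INR m)))).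
    by rewrite Rmult_assoc.
  apply: (@cv_bounded _ _ (Rplus B B)) => m.
  rewrite Rmult_0_r Rminus_0_r intrB.
  apply: Rle_trans (Rabs_sub_le _ _) _.
  exact: Rplus_le_compat.
exact: (UL_sequence _ _ _ cv1 cv2).
Qed.
End Cob.

Lemma zdotI_add d (c : 'I_d -> int) u v : zdotI c (zadd u v) = zdotI c u + zdotI c v.
Proof. by rewrite /zdotI -big_split /=; apply: eq_bigr => j _; rewrite /zadd z2i_add mulrDr. Qed.

Lemma zdotI_sub d (c : 'I_d -> int) u v : zdotI c (zsub u v) = zdotI c u - zdotI c v.
Proof. by rewrite /zdotI -sumrB /=; apply: eq_bigr => j _; rewrite /zsub z2i_sub mulrBr. Qed.

Lemma zdotI_zero d (c : 'I_d -> int) : zdotI c (@zzero d) = 0.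
Proof. by rewrite /zdotI big1 // => j _; rewrite /zzero z2i0 mulr0. Qed.

Lemma in_seq_In (T : eqType) (x : T) (s : seq T) : x \in s -> List.In x s.
Proof. elim: s => [|y s IH] //; rewrite in_cons => /orP [/eqP -> | /IH h]; [left | right] => //. Qed.

Lemma i2z_add a b : i2z (a + b) = Z.add (i2z a) (i2z b).
Proof. apply: z2i_inj; by rewrite z2i_add !i2zK. Qed.
Lemma i2z_opp a : i2z (- a) = Z.opp (i2z a).
Proof. apply: z2i_inj; by rewrite z2i_opp !i2zK. Qed.
Lemma i2z_inj : injective i2z.
Proof. exact: (can_inj i2zK). Qed.
Ltac intlia := apply: i2z_inj; rewrite ?(i2z_add, i2z_opp); lia.

Lemma zdotI_e d (c : 'I_d -> int) j0 :
  zdotI c (fun j => if j == j0 then Z.of_nat 1 else Z0) = c j0.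
Proof.
rewrite /zdotI (bigD1 j0) //= eqxx (z2i_of_nat 1) mulr1 big1 ?addr0 //.
by move=> j /negPf ->; rewrite z2i0 mulr0.
Qed.

Lemma ftp_notnull (S : finType) (C : S -> S -> bool) (d : nat) (h : S -> S -> zvec d) :
  sft_transitive C -> (exists s0, in_Sigma C s0) -> ftp C h -> ~ NullI (Dset C h).
Proof.
move=> tr [s0 Hs0] F [c [[j0 cj0] Hc]].
have [g Hg] := cob_g Hc tr (s0 Z0).
pose Mn := `|c j0|.+1.
pose M : int := Mn%:Z.
pose G := fun v : zvec d => (M %| zdotI c v)%Z.
have sG : is_subgroup G.
  split; first by rewrite /G zdotI_zero dvdz0.
  by move=> u v Gu Gv; rewrite /G zdotI_sub rpredB.
have MnZ : Z.lt Z0 (Z.of_nat Mn) by lia.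
have fG : finite_index G.
  exists (List.map (fun f : {ffun 'I_d -> 'I_Mn} => fun j => Z.of_nat (f j)) (enum {ffun 'I_d -> 'I_Mn})).
  move=> v.
  have hlt : forall j, (Z.to_nat (Z.modulo (v j) (Z.of_nat Mn)) < Mn)%N.
    move=> j; apply/ssrnat.ltP; have := Z.mod_pos_bound (v j) (Z.of_nat Mn) MnZ; lia.
  pose f : {ffun 'I_d -> 'I_Mn} := [ffun j => Ordinal (hlt j)].
  exists (fun j => Z.of_nat (f j)); split.
    apply: List.in_map; apply: in_seq_In; by rewrite mem_enum.
  rewrite /G /zdotI; apply/dvdzP.
  exists (\sum_j c j * z2i (Z.div (v j) (Z.of_nat Mn))).
  rewrite mulr_suml; apply: eq_bigr => j _; rewrite /zsub ffunE /=.
  have e : Z.sub (v j) (Z.of_nat (Z.to_nat (Z.modulo (v j) (Z.of_nat Mn)))) =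
           Z.mul (Z.div (v j) (Z.of_nat Mn)) (Z.of_nat Mn).
    have := Z.mod_pos_bound (v j) (Z.of_nat Mn) MnZ.
    have := Z.div_mod (v j) (Z.of_nat Mn); lia.
  by rewrite e z2i_mul z2i_of_nat mulrA.
pose k0 := - g (s0 Z0).
pose U := fun (s : seqZ S) (v : zvec d) => (M %| zdotI c v - (g (s Z0) + k0))%Z.
pose V := fun (s : seqZ S) (v : zvec d) => (M %| zdotI c v - (g (s Z0) + k0 + c j0))%Z.
have sat : forall W : seqZ S -> zvec d -> Prop,
    (exists t : int -> int, forall s v, W s v = (M %| zdotI c v - t (g (s Z0)))%Z) ->
    sat_open C G W.
  move=> W [t Ht]; split.
    move=> s v g' Gg'; rewrite !Ht zdotI_add addrAC => H; exact: rpredD.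
  move=> s v _ Wv; exists 0%N => t' _ Ht'.
  rewrite Ht (Ht' Z0) -?Ht //; lia.
have oU : sat_open C G U by apply: sat; exists (fun x => x + k0).
have oV : sat_open C G V by apply: sat; exists (fun x => x + k0 + c j0).
have neU : exists s v, in_Sigma C s /\ U s v.
  exists s0, (@zzero d); split => //; rewrite /U zdotI_zero /k0 subrr subr0; exact: dvdz0.
have neV : exists s v, in_Sigma C s /\ V s v.
  exists s0, (fun j => if j == j0 then Z.of_nat 1 else Z0); split => //.
  rewrite /V zdotI_e /k0 subrr add0r subrr; exact: dvdz0.
have [s [v [n [n0 [Hs [Us Vs]]]]]] := F G sG fG U V oU oV neU neV.
move: Vs; rewrite /V zdotI_add EX (tele Hg Hs n) /shiftn /=.
rewrite (_ : zdotI c v + (g (s (Z.of_nat n)) - g (s Z0)) - (g (s (Z.of_nat n)) + k0 + c j0) =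
             (zdotI c v - (g (s Z0) + k0)) - c j0); last by intlia.
move=> Vs.
have Mc : (M %| c j0)%Z.
  rewrite (_ : c j0 = (zdotI c v - (g (s Z0) + k0)) - ((zdotI c v - (g (s Z0) + k0)) - c j0)); last by intlia.
  exact: rpredB.
move: Mc; rewrite dvdzE /= => /dvdn_leq.
rewrite absz_gt0 cj0 => /(_ isT).
by rewrite /Mn ltnn.
Qed.

Lemma full_of_notnull (S : finType) (C : S -> S -> bool) (d : nat) (h : S -> S -> zvec d) :
  rot_set C h (fun _ => R0) -> ~ NullI (Dset C h) -> full_dim (rot_set C h).
Proof.
move=> r0 nN.
case: (dich (Dset C h)) => [//|[W [DW dW]]].
have [pp Hpp] := @choice_fun _ _ (fun i p => exists n, (0 < n)%N /\ in_Sigma C p /\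
   (forall j, shiftn n p j = p j) /\ W i = hsum h p n) DW.
have [nn Hnn] := @choice_fun _ _ (fun i n => (0 < n)%N /\ in_Sigma C (pp i) /\
   (forall j, shiftn n (pp i) j = pp i j) /\ W i = hsum h (pp i) n) Hpp.
pose P : 'I_d.+1 -> rvec d := fun k =>
  match unlift ord0 k with
  | Some i => fun j => Rdiv (IZR (W i j)) (INR (nn i))
  | None => fun _ => R0 end.
exists P; split.
  move=> k; rewrite /P; case: (unlift ord0 k) => [i|] //.
  have [n0 [Hs [Hper EW]]] := Hnn i.
  exists (pp i); split => //; rewrite EW; exact: per_rot.
have -> : (fun i : 'I_d => fun j => Rminus (P (lift ord0 i) j) (P ord0 j)) =
          (fun i j => Rdiv (IZR (W i j)) (INR (nn i))).
  apply: functional_extensionality => i; apply: functional_extensionality => j.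
  by rewrite /P liftK unlift_none Rminus_0_r.
apply: Rind => // i; by case: (Hnn i).
Qed.

Theorem mainTheorem7 (d : nat) (S : finType) (C : S -> S -> bool)
  (h : S -> S -> zvec d) :
  sft_transitive C ->
  (rot_set C h (fun _ => R0) ->
     (full_dim (rot_set C h) <-> rank_full (gen_subgroup (Dset C h)))) /\
  (ftp C h -> rot_set C h (fun _ => R0) -> full_dim (rot_set C h)).
Proof.
move=> tr; split.
  move=> r0; split; last by move=> rf; apply: full_of_notnull => //; exact: RZ.
  move=> [P [KP IP]].
  case: (dich (Dset C h)) => [[c [nz Hc]]|[W [DW dW]]]; last first.
    exists W; split; [by move=> i; apply: gen_in | exact: Zind].
  have Pc : forall k, \sum_j (c j)%:~R * P k j = 0.
    move=> k; have [s [Hs Hr]] := KP k; exact: (cob_rot Hc tr Hs Hr).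
  exfalso; apply: (Rdual IP nz) => i.
  transitivity (\sum_j ((c j)%:~R * P (lift ord0 i) j - (c j)%:~R * P ord0 j)).
    by apply: eq_bigr => j _; rewrite -mulrBr.
  by rewrite sumrB !Pc subr0.
move=> F r0; apply: full_of_notnull => //.
apply: ftp_notnull => //; case: r0 => s [Hs _]; by exists s.
Qed.
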